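(* Let $g(t)=\sum_{n\ge0}g_nt^n$ be a formal power series with $g_0=1$ and $f(t)=\sum_{n\ge1}f_nt^n$ a formal power series with $f_1\neq0$. Put $z_0=f_1$, $w_0=g_1$ and define the formal power series \[ Z(t)=\frac{f(t)-z_0t\,g(t)}{f(t)}+z_0=\sum_{k\ge0}z_kt^k,\qquad W(t)=\frac{(1-w_0t)g(t)-1}{f(t)}+w_0=\sum_{k\ge0}w_kt^k . \] Let $J=(J_{i,j})_{i,j\ge0}$ be the infinite matrix with $J_{i,0}=w_i$, $J_{i,1}=z_i$ for all $i\ge0$, $J_{i,i+1}=1$ for $i\ge1$, and all other entries $0$; i.e. \[ J=\begin{bmatrix} w_0&z_0&&&\\ w_1&z_1&1&&\\ w_2&z_2&0&1&\\ w_3&z_3&0&0&1\\ \vdots&\vdots&&&&\ddots\end{bmatrix}. \] Then $[g,f]\,J=\overline{[g,f]}$, where $\overline{[g,f]}$ denotes the matrix obtained from the quasi-Riordan array $[g,f]$ by deleting its first (i.e. $0$th) row.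
   Context: The quasi-Riordan array $[g,f]$ is the infinite lower triangular matrix $(r_{n,k})_{n,k\ge0}$ whose $0$th column has generating function $g$ and whose $k$th column ($k\ge1$) has generating function $t^{k-1}f(t)$, i.e. $r_{n,0}=g_n$ and $r_{n,k}=f_{n-k+1}$ for $k\ge1$ (with $f_j=0$ for $j\le0$). (Under the stated choices of $z_0,w_0$, the expressions defining $Z$ and $W$ are genuine formal power series.) *)

(* Defs.v *)
From HB Require Import structures.
From mathcomp Require Import all_boot all_order all_algebra.
Set Implicit Arguments. Unset Strict Implicit. Unset Printing Implicit Defensive.
Import Order.TTheory GRing.Theory Num.Theory.
Local Open Scope ring_scope.

(* Formal power series over a field R, represented by coefficient sequences
   a : nat -> R  (a n = coefficient of t^n). *)

Definition sconst (R : fieldType) (c : R) : nat -> R :=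
  fun n => if n == 0%N then c else 0.
Definition sX (R : fieldType) : nat -> R :=
  fun n => if n == 1%N then 1 else 0.
Definition sadd (R : fieldType) (a b : nat -> R) : nat -> R := fun n => a n + b n.
Definition ssub (R : fieldType) (a b : nat -> R) : nat -> R := fun n => a n - b n.
Definition sscale (R : fieldType) (c : R) (a : nat -> R) : nat -> R := fun n => c * a n.
Definition smul (R : fieldType) (a b : nat -> R) : nat -> R :=
  fun n => \sum_(i < n.+1) a i * b (n - i)%N.

(* The quasi-Riordan array [g,f]: r_{n,0} = g_n, r_{n,k} = f_{n-k+1} (k >= 1),
   with f_j = 0 for j <= 0, i.e. r_{n,k} = 0 for k > n. *)
Definition qRiordan (R : fieldType) (g f : nat -> R) (n k : nat) : R :=
  if k == 0%N then g n else if (k <= n)%N then f (n - k + 1)%N else 0.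

Definition Jmat (R : fieldType) (w z : nat -> R) (i j : nat) : R :=
  if j == 0%N then w i
  else if j == 1%N then z i
  else if (1 <= i)%N && (j == i.+1) then 1 else 0.

(* Product of two infinite matrices A B where A is lower triangular
   (A n j = 0 for j > n), so the sum over j is finite: j <= n. *)
Definition lt_mul (R : fieldType) (A B : nat -> nat -> R) (n k : nat) : R :=
  \sum_(j < n.+1) A n j * B j k.

(* Main.v *)
Require Import Defs.
From HB Require Import structures.
From mathcomp Require Import all_boot all_order all_algebra.
Import Order.TTheory GRing.Theory Num.Theory.
Local Open Scope ring_scope.

Lemma smul_X (R : fieldType) (c : R) g m :
  smul (sscale c (sX R)) g m.+1 = c * g m.
Proof.
rewrite /smul big_ord_recl big_ord_recl big1 /sscale /sX /=.
  by rewrite mulr0 mul0r add0r mulr1 subn1 addr0.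
by move=> i _; rewrite /bump /= mulr0 mul0r.
Qed.

Lemma smul_1X (R : fieldType) (c : R) g m :
  smul (ssub (sconst 1) (sscale c (sX R))) g m.+1 = g m.+1 - c * g m.
Proof.
rewrite /smul big_ord_recl big_ord_recl big1 /ssub /sconst /sscale /sX /=.
  by rewrite mulr0 subr0 mul1r subn0 mulr1 add0r subn1 addr0 mulNr.
by move=> i _; rewrite /bump /= mulr0 subr0 mul0r.
Qed.

Lemma smul_split (R : fieldType) (a f : nat -> R) m : f 0%N = 0 ->
  smul a f m.+1 = a 0%N * f m.+1 + \sum_(i < m) a i.+1 * f (m - i)%N.
Proof.
move=> f0; rewrite /smul big_ord_recl big_ord_recr /= subnn f0 mulr0 addr0 subn0.
congr (_ + _); apply: eq_bigr => i _; rewrite /bump /=.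
Qed.

Theorem proposition3p1 (R : fieldType) (g f Z W : nat -> R) :
  g 0%N = 1 ->
  f 0%N = 0 ->
  f 1%N != 0 ->
  (forall n, smul (ssub Z (sconst (f 1%N))) f n
             = ssub f (smul (sscale (f 1%N) (sX R)) g) n) ->
  (forall n, smul (ssub W (sconst (g 1%N))) f n
             = ssub (smul (ssub (sconst 1) (sscale (g 1%N) (sX R))) g) (sconst 1) n) ->
  forall n k : nat,
    lt_mul (qRiordan g f) (Jmat W Z) n k = qRiordan g f n.+1 k.
Proof.
move=> g0 f0 f1 HZ HW n k.
have Z0 : Z 0%N = f 1%N.
  move: (HZ 1%N); rewrite smul_split // /ssub smul_X g0 big_ord0 addr0 mulr1 subrr.
  by move/eqP; rewrite mulf_eq0 (negbTE f1) orbF subr_eq0 => /eqP.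
have W0 : W 0%N = g 1%N.
  move: (HW 1%N); rewrite smul_split // /ssub smul_1X g0 big_ord0 addr0 mulr1 subrr /sconst /=.
  by rewrite subrr; move/eqP; rewrite mulf_eq0 (negbTE f1) orbF subr_eq0 => /eqP.
rewrite /lt_mul big_ord_recl /qRiordan /=.
have Hs : forall F : nat -> R, \sum_(i < n) (if (bump 0 i <= n)%N then f (n - bump 0 i + 1)%N else 0) * F (bump 0 i)
   = \sum_(i < n) F i.+1 * f (n - i)%N.
  move=> F; apply: eq_bigr => i _; rewrite /bump /= add1n ltn_ord mulrC; congr (_ * f _).
  by rewrite addn1 subnSK.
case: k => [|[|k]].
- rewrite /Jmat /= Hs W0.
  move: (HW n.+1); rewrite smul_split // /ssub smul_1X W0 subrr mul0r add0r /sconst /= subr0.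
  under eq_bigr do rewrite subr0.
  by move=> ->; rewrite mulrC addrC subrK.
- rewrite /Jmat /= (Hs Z) Z0.
  move: (HZ n.+1); rewrite smul_split // /ssub smul_X Z0 subrr mul0r add0r /sconst /=.
  under eq_bigr do rewrite subr0.
  by move=> ->; rewrite subn1 addn1 mulrC addrC subrK.
- rewrite /Jmat /= mulr0 add0r.
  rewrite ltnS subSS; case: (ltnP k n) => hk.
    rewrite (bigD1 (Ordinal hk)) //= big1 ?addr0.
      by rewrite /bump /= add1n hk eqxx mulr1.
    move=> i /eqP hi; rewrite /bump /= add1n eqSS.
    have -> : (k.+1 == i.+1) = false.
      by rewrite eqSS; apply/negbTE/eqP => e; apply: hi; apply: val_inj.
    by rewrite mulr0.
  rewrite big1 // => i _; rewrite /bump /= add1n eqSS.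
  have -> : (k.+1 == i.+1) = false.
    by rewrite eqSS; apply/negbTE; rewrite neq_ltn; apply/orP; right; apply: leq_trans (ltn_ord i) hk.
  by rewrite mulr0.
Qed.
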